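(* With $T=\mathcal{P}_{\mathsf{ufs}}$, $FX=1+\mathbb{A}\times X+[\mathbb{A}]X$, $GX=2\times X^{\mathbb{A}}\times[\mathbb{A}]X$, let $(\mu F,\iota)=(\overline{\mathbb{A}}^*/{=_\alpha},\iota)$ be the initial $F$-algebra and $(\nu G,\tau)=(\mathcal{P}_{\mathsf{fs}}(\overline{\mathbb{A}}^*/{=_\alpha}),\tau)$ the terminal $G$-coalgebra. Let $e\colon\mathcal{P}_{\mathsf{ufs}}(\overline{\mathbb{A}}^*/{=_\alpha})\to\mathcal{P}_{\mathsf{fs}}(\overline{\mathbb{A}}^*/{=_\alpha})$ be the unique $G$-coalgebra homomorphism from $(\mathcal{P}_{\mathsf{ufs}}(\mu F),(\varepsilon_{\mu F}\cdot J\iota^{-1})^\sharp)$ to $(\nu G,\tau)$. Then $e$ is the inclusion map $\mathcal{P}_{\mathsf{ufs}}(\overline{\mathbb{A}}^*/{=_\alpha})\hookrightarrow\mathcal{P}_{\mathsf{fs}}(\overline{\mathbb{A}}^*/{=_\alpha})$.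
   Context: Fix a countably infinite set $\mathbb{A}$ of names; $\mathsf{Nom}$: nominal sets and equivariant maps; $1=\{*\}$, $2=\{0,1\}$; $[\mathbb{A}]X$ abstraction sets with classes $\langle a\rangle x$; $\mathcal{P}_{\mathsf{fs}}$, $\mathcal{P}_{\mathsf{ufs}}$ the finitely / uniformly finitely supported power sets, unit $\eta$ singleton, multiplication $\mu$ union. Bar strings: words over $\overline{\mathbb{A}}=\mathbb{A}\cup\{\mathord{|}a\}$; $=_\alpha$ the least equivalence with $x\,\mathord{|}a\,v=_\alpha x\,\mathord{|}b\,w$ whenever $\langle a\rangle v=\langle b\rangle w$; classes $[w]_\alpha$. $\iota( * )=[\varepsilon]_\alpha$, $\iota(a,[w]_\alpha)=[aw]_\alpha$, $\iota(\langle a\rangle[w]_\alpha)=[\mathord{|}a\,w]_\alpha$; $J\iota^{-1}=\eta\cdot\iota^{-1}$. $\tau(S)=(b,a\mapsto S_a,S_{\mathord{|}a})$ with $b=1$ iff $[\varepsilon]_\alpha\in S$, $S_a=\{[w]_\alpha:[aw]_\alpha\in S\}$, $S_{\mathord{|}a}=\langle a\rangle\{[w]_\alpha:[\mathord{|}a\,w]_\alpha\in S\}$ for $a$ fresh for $S$. $\varepsilon_X\colon\mathcal{P}_{\mathsf{ufs}}FX\to G\mathcal{P}_{\mathsf{ufs}}X$, $\varepsilon_X(S)=(b,a\mapsto\{s:(a,s)\in S\},\langle a\rangle\{s:\langle a\rangle s\in S\})$ with $b=1$ iff $*\in S$ and $a$ fresh for $S$. For an equivariant $g\colon X\to G\mathcal{P}_{\mathsf{ufs}}Y$,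 $g^\sharp\colon\mathcal{P}_{\mathsf{ufs}}X\to G\mathcal{P}_{\mathsf{ufs}}Y$ is its homomorphic extension w.r.t. the canonical $\mathcal{P}_{\mathsf{ufs}}$-algebra structure $G\mu_Y\cdot\rho_{\mathcal{P}_{\mathsf{ufs}}Y}$ on $G\mathcal{P}_{\mathsf{ufs}}Y$, i.e. $g^\sharp=G\mu_Y\cdot\rho_{\mathcal{P}_{\mathsf{ufs}}Y}\cdot\mathcal{P}_{\mathsf{ufs}}g$; concretely, for $U\in\mathcal{P}_{\mathsf{ufs}}X$ with $g(u)=(b_u,f_u,\langle a\rangle V_u)$ ($a$ fresh for $U$), $g^\sharp(U)=(\max_u b_u,\,a'\mapsto\bigcup_u f_u(a'),\,\langle a\rangle\bigcup_u V_u)$. Here $\rho_X(S)=(b,a\mapsto\{f(a):f\in p_1[S]\},\langle a\rangle\{s:\langle a\rangle s\in p_2[S]\})$ ($b=1$ iff $1\in p_0[S]$, $a$ fresh) is the distributive law of the canonical lifting of $G$. *)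

(* Defs.v *)
From Stdlib Require Import List Arith.
Import ListNotations.

Definition name := nat.

(* letters of  Abar = A  \cup { |a : a in A } *)
Inductive letter : Type := Fr (a : name) | Bd (a : name).
Definition word := list letter.

Definition swapn (a b c : name) : name :=
  if Nat.eqb c a then b else if Nat.eqb c b then a else c.

Definition swapl (a b : name) (l : letter) : letter :=
  match l with Fr c => Fr (swapn a b c) | Bd c => Bd (swapn a b c) end.

Definition swapw (a b : name) (w : word) : word := map (swapl a b) w.

Definition lname (l : letter) : name := match l with Fr c => c | Bd c => c end.
Definition names (w : word) : list name := map lname w.

(* b # v for a (raw) bar string: the least support of v is its set of names *)
Definition fresh_word (b : name) (v : word) : Prop := ~ In b (names v).

(* <a>v = <b>w  in  [A](Abar^* ) *)
Definition abs_eq_word (a : name) (v : word) (b : name) (w : word) : Prop :=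
  (a = b /\ v = w) \/ (fresh_word b v /\ swapw a b v = w).

Inductive alpha : word -> word -> Prop :=
| alpha_refl  : forall w, alpha w w
| alpha_sym   : forall w v, alpha w v -> alpha v w
| alpha_trans : forall u v w, alpha u v -> alpha v w -> alpha u w
| alpha_rule  : forall x a v b w, abs_eq_word a v b w ->
                  alpha (x ++ Bd a :: v) (x ++ Bd b :: w).

(* ---------- subsets of muF = Abar^* /=_alpha ----------
   A subset of Abar^* /=_alpha is represented by the =_alpha-saturated
   predicate on bar strings (w in S  iff  [w]_alpha in S). *)
Definition cset := word -> Prop.

Definition saturated (S : cset) : Prop :=
  forall w v, alpha w v -> S w -> S v.

(* pointwise action of the transposition (a b) on a set of classes:
   (a b).S = { (a b).[w] | [w] in S } *)
Definition swapset (a b : name) (S : cset) : cset := fun w => S (swapw a b w).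

Definition supports_set (N : list name) (S : cset) : Prop :=
  forall a b, ~ In a N -> ~ In b N -> swapset a b S = S.

Definition supports_cls (N : list name) (w : word) : Prop :=
  forall a b, ~ In a N -> ~ In b N -> alpha (swapw a b w) w.

Definition fs (S : cset) : Prop := exists N, supports_set N S.
Definition ufs (S : cset) : Prop :=
  exists N, forall w, S w -> supports_cls N w.

Definition fresh_set (b : name) (S : cset) : Prop :=
  exists N, supports_set N S /\ ~ In b N.

Definition inPufs (S : cset) : Prop := saturated S /\ ufs S.
Definition inPfs  (S : cset) : Prop := saturated S /\ fs S.

(* ---------- the functor G X = 2 x X^A x [A]X on X = sets of classes ----------
   2 is represented by Prop; an element <a>S of [A]X by the pair (a,S),
   compared with the abstraction equality abs_eq. *)
Definition Gobj : Type := (Prop * (name -> cset) * (name * cset))%type.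

Definition abs_eq (a : name) (S : cset) (b : name) (T : cset) : Prop :=
  (a = b /\ S = T) \/ (fresh_set b S /\ swapset a b S = T).

Definition Geq (x y : Gobj) : Prop :=
  match x, y with
  | (b1, f1, (a1, X1)), (b2, f2, (a2, X2)) =>
      b1 = b2 /\ (forall a, f1 a = f2 a) /\ abs_eq a1 X1 a2 X2
  end.

Definition Gmap (e : cset -> cset) (x : Gobj) : Gobj :=
  match x with (b, f, (a, X)) => (b, fun c => e (f c), (a, e X)) end.

(* tau(S), computed with the fresh name a (a # S) *)
Definition tau_at (a : name) (S : cset) : Gobj :=
  ( S [],
    fun c => (fun v => S (Fr c :: v)),
    (a, fun v => S (Bd a :: v)) ).

(* g = eps_{muF} . J iota^{-1} : muF -> G P_ufs(muF), unfolded at u = [w]: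
     b_u      = 1  iff  iota( * ) = u             i.e. [eps] = [w]
     f_u(c)   = { s | iota(c,s) = u }            = { [v] | [c v] = [w] }
     V_u      = { s | iota(<a>s) = u }  (a fresh)= { [v] | [|a v] = [w] }
   and its homomorphic extension
     g^#(U) = (max_{u in U} b_u, c |-> U_{u in U} f_u(c), <a> U_{u in U} V_u)
   for a fresh for U. *)
Definition c_at (a : name) (U : cset) : Gobj :=
  ( exists w, U w /\ alpha [] w,
    fun c => (fun v => exists w, U w /\ alpha (Fr c :: v) w),
    (a, fun v => exists w, U w /\ alpha (Bd a :: v) w) ).

(* e is a G-coalgebra homomorphism (in Nom, i.e. equivariant) from
   (P_ufs(muF), (eps . J iota^{-1})^#) to (P_fs(muF), tau) *)
Definition is_hom (e : cset -> cset) : Prop :=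
  (forall U, inPufs U -> inPfs (e U)) /\
  (forall a b U, inPufs U -> e (swapset a b U) = swapset a b (e U)) /\
  (forall U a a', inPufs U -> fresh_set a U -> fresh_set a' (e U) ->
      Geq (Gmap e (c_at a U)) (tau_at a' (e U))).

(* Main.v *)
Require Import Defs.
From Stdlib Require Import List Arith Lia FunctionalExtensionality PropExtensionality.
Import ListNotations.

Ltac sw := unfold swapn; repeat (match goal with |- context[Nat.eqb ?x ?y] =>
  is_var x; is_var y; destruct (Nat.eqb_spec x y); subst; simpl end); try congruence; try lia.

Lemma swapn_invol a b x : swapn a b (swapn a b x) = x.
Proof. sw. Qed.
Lemma swapn_same a x : swapn a a x = x.
Proof. sw. Qed.
Lemma swapn_r a b : swapn a b b = a.
Proof. sw. Qed.
Lemma swapn_conj d c a b x :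
  swapn (swapn d c a) (swapn d c b) (swapn d c x) = swapn d c (swapn a b x).
Proof. unfold swapn at 4 5 6.
  destruct (Nat.eqb_spec a d); destruct (Nat.eqb_spec a c);
  destruct (Nat.eqb_spec b d); destruct (Nat.eqb_spec b c);
  destruct (Nat.eqb_spec x d); destruct (Nat.eqb_spec x c); subst; sw. Qed.
Lemma swapn_comp a a' c x : a <> a' -> c <> a -> c <> a' ->
  swapn a a' x = swapn a c (swapn a' c (swapn a c x)).
Proof. intros; unfold swapn at 4.
  destruct (Nat.eqb_spec x a); subst; [sw|].
  destruct (Nat.eqb_spec x c); subst; [sw|]. sw. Qed.

Lemma swapw_invol a b v : swapw a b (swapw a b v) = v.
Proof. unfold swapw; rewrite map_map; rewrite <- (map_id v) at 2; apply map_ext.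
  intros [x|x]; simpl; rewrite swapn_invol; auto. Qed.
Lemma swapw_same a v : swapw a a v = v.
Proof. unfold swapw; rewrite <- (map_id v) at 2; apply map_ext.
  intros [x|x]; simpl; rewrite swapn_same; auto. Qed.
Lemma swapw_cons a b l v : swapw a b (l :: v) = swapl a b l :: swapw a b v.
Proof. reflexivity. Qed.
Lemma swapw_app a b x y : swapw a b (x ++ y) = swapw a b x ++ swapw a b y.
Proof. apply map_app. Qed.
Lemma names_swapw d c v : names (swapw d c v) = map (swapn d c) (names v).
Proof. unfold names, swapw; rewrite !map_map; apply map_ext; intros [x|x]; reflexivity. Qed.

Lemma alpha_app x v w : alpha v w -> alpha (x ++ v) (x ++ w).
Proof. induction 1.
  - apply alpha_refl.
  - apply alpha_sym; auto.
  - eapply alpha_trans; eauto.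
  - rewrite !app_assoc; apply alpha_rule; auto. Qed.

Lemma alpha_swap d c u v : alpha u v -> alpha (swapw d c u) (swapw d c v).
Proof. induction 1.
  - apply alpha_refl.
  - apply alpha_sym; auto.
  - eapply alpha_trans; eauto.
  - rewrite !swapw_app, !swapw_cons; simpl. apply alpha_rule.
    destruct H as [[-> ->]|[Hf <-]]; [left; auto|right; split].
    + unfold fresh_word in *; rewrite names_swapw; intro Hi.
      apply in_map_iff in Hi; destruct Hi as [y [Hy Hi]].
      apply (f_equal (swapn d c)) in Hy; rewrite !swapn_invol in Hy; subst; auto.
    + unfold swapw; rewrite !map_map; apply map_ext; intros [y|y]; simpl;
      rewrite swapn_conj; auto. Qed.

Lemma alpha_Fr_gen u u' : alpha u u' ->
  (forall c v, u = Fr c :: v -> exists v', u' = Fr c :: v' /\ alpha v v') /\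
  (forall c v, u' = Fr c :: v -> exists v', u = Fr c :: v' /\ alpha v' v).
Proof. induction 1.
  - split; intros c v ->; exists v; split; auto; apply alpha_refl.
  - destruct IHalpha as [A B]; split.
    + intros c v0 E; destruct (B c v0 E) as [v' [? ?]]; exists v'; split; auto; apply alpha_sym; auto.
    + intros c v0 E; destruct (A c v0 E) as [v' [? ?]]; exists v'; split; auto; apply alpha_sym; auto.
  - destruct IHalpha1 as [A1 B1], IHalpha2 as [A2 B2]; split.
    + intros c v0 E; destruct (A1 c v0 E) as [v1 [E1 H1]]; destruct (A2 c v1 E1) as [v2 [E2 H2]];
      exists v2; split; auto; eapply alpha_trans; eauto.
    + intros c v0 E; destruct (B2 c v0 E) as [v1 [E1 H1]]; destruct (B1 c v1 E1) as [v2 [E2 H2]];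
      exists v2; split; auto; eapply alpha_trans; eauto.
  - destruct x as [|l x]; simpl; split; intros c v0 E; try discriminate;
    injection E as -> <-; eexists; split; [reflexivity| | reflexivity|];
    [apply alpha_rule; auto | apply alpha_rule; auto]. Qed.

Lemma alpha_Fr c v v' : alpha (Fr c :: v) (Fr c :: v') -> alpha v v'.
Proof. intro H; destruct (proj1 (alpha_Fr_gen _ _ H) c v eq_refl) as [w [E Hw]].
  injection E as ->; auto. Qed.

Lemma swap_fresh_comp a b c v : ~ In b (names v) -> ~ In c (names v) ->
  swapw b c (swapw a b v) = swapw a c v.
Proof. intros Hb Hc; unfold swapw; rewrite map_map; apply map_ext_in.
  intros l Hl; assert (Hn : In (lname l) (names v)) by (apply in_map; auto).
  destruct l as [x|x]; simpl in *; f_equal;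
  (assert (x <> b) by (intro; subst; auto); assert (x <> c) by (intro; subst; auto));
  unfold swapn at 2 3; destruct (Nat.eqb_spec x a); subst; sw. Qed.

Lemma alpha_Bd_gen u u' : alpha u u' ->
  (forall a v, u = Bd a :: v -> exists b w L, u' = Bd b :: w /\
       forall c, ~ In c L -> alpha (swapw a c v) (swapw b c w)) /\
  (forall a v, u' = Bd a :: v -> exists b w L, u = Bd b :: w /\
       forall c, ~ In c L -> alpha (swapw b c w) (swapw a c v)).
Proof. induction 1.
  - split; intros a v ->; exists a, v, []; split; auto; intros; apply alpha_refl.
  - destruct IHalpha as [A B]; split.
    + intros a v0 E; destruct (B a v0 E) as [b [w0 [L [? HL]]]]; exists b, w0, L; split; auto;
      intros; apply alpha_sym; auto.
    + intros a v0 E; destruct (A a v0 E) as [b [w0 [L [? HL]]]]; exists b, w0, L; split; auto;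
      intros; apply alpha_sym; auto.
  - destruct IHalpha1 as [A1 B1], IHalpha2 as [A2 B2]; split.
    + intros a v0 E; destruct (A1 a v0 E) as [b1 [w1 [L1 [E1 H1]]]];
      destruct (A2 b1 w1 E1) as [b2 [w2 [L2 [E2 H2]]]];
      exists b2, w2, (L1 ++ L2); split; auto; intros c Hc; rewrite in_app_iff in Hc;
      eapply alpha_trans; [apply H1|apply H2]; tauto.
    + intros a v0 E; destruct (B2 a v0 E) as [b1 [w1 [L1 [E1 H1]]]];
      destruct (B1 b1 w1 E1) as [b2 [w2 [L2 [E2 H2]]]];
      exists b2, w2, (L1 ++ L2); split; auto; intros c Hc; rewrite in_app_iff in Hc;
      eapply alpha_trans; [apply H2|apply H1]; tauto.
  - destruct x as [|[d|d] x]; simpl; split; intros a0 v0 E; try discriminate.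
    + injection E as E1 E2; subst a0 v0. destruct H as [[Hab Hvw]|[Hf Hw]].
      * subst; eexists _, _, []; split; [reflexivity|]; intros; apply alpha_refl.
      * subst w; exists b, (swapw a b v), (b :: names v); split; auto; intros c Hc; simpl in Hc.
        rewrite swap_fresh_comp; [apply alpha_refl|auto|tauto].
    + injection E as E1 E2; subst a0 v0. destruct H as [[Hab Hvw]|[Hf Hw]].
      * subst; eexists _, _, []; split; [reflexivity|]; intros; apply alpha_refl.
      * subst w; exists a, v, (b :: names v); split; auto; intros c Hc; simpl in Hc.
        rewrite swap_fresh_comp; [apply alpha_refl|auto|tauto].
    + injection E as E1 E2; subst a0 v0. eexists _, _, []; split; [reflexivity|].
      intros; apply alpha_swap, alpha_rule; auto.
    + injection E as E1 E2; subst a0 v0. eexists _, _, []; split; [reflexivity|].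
      intros; apply alpha_swap, alpha_rule; auto. Qed.

Lemma fresh_ex (L : list nat) : exists n, ~ In n L.
Proof. assert (H : forall x, In x L -> x < S (list_sum L)).
  { induction L as [|y L IHL]; simpl; intros x Hx; [contradiction|destruct Hx as [->|H]; [lia|apply IHL in H; lia]]. }
  exists (S (list_sum L)); intro Hi; apply H in Hi; lia. Qed.

Lemma alpha_Bd a v v' : alpha (Bd a :: v) (Bd a :: v') -> alpha v v'.
Proof. intro H; destruct (proj1 (alpha_Bd_gen _ _ H) a v eq_refl) as [b [w [L [E HL]]]].
  injection E as E1 E2; subst b w. destruct (fresh_ex L) as [c Hc].
  rewrite <- (swapw_invol a c v), <- (swapw_invol a c v'). apply alpha_swap; auto. Qed.

Lemma sub_eq (l : letter) (U : cset) : saturated U ->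
  (fun v => exists w, U w /\ alpha (l :: v) w) = (fun v => U (l :: v)).
Proof. intro HS; apply functional_extensionality; intro v; apply propositional_extensionality;
  split; [intros [w [Hw Ha]]; eapply HS; [apply alpha_sym, Ha|auto]
         |intro H; exists (l :: v); split; auto; apply alpha_refl]. Qed.

Lemma sub_Pufs (l : letter) (U : cset) : inPufs U ->
  inPufs (fun v => exists w, U w /\ alpha (l :: v) w).
Proof. intros [HS [N HN]]; split.
  - intros v v' Hv [w [Hw Ha]]; exists w; split; auto.
    eapply alpha_trans; [|apply Ha]; apply alpha_sym; apply (alpha_app [l]); auto.
  - exists (lname l :: N); intros v [w [Hw Ha]] x y Hx Hy; simpl in Hx, Hy.
    assert (H1 : alpha (swapw x y (l :: v)) (l :: v)).
    { eapply alpha_trans; [apply alpha_swap, Ha|].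
      eapply alpha_trans; [apply (HN w Hw x y); tauto|apply alpha_sym; auto]. }
    assert (E : swapl x y l = l).
    { assert (swapn x y (lname l) = lname l).
      { unfold swapn; destruct (Nat.eqb_spec (lname l) x); [subst; tauto|];
        destruct (Nat.eqb_spec (lname l) y); [subst; tauto|auto]. }
      destruct l; simpl in *; congruence. }
    rewrite swapw_cons, E in H1. destruct l; [eapply alpha_Fr|eapply alpha_Bd]; eauto. Qed.

Lemma ufs_supp U : inPufs U -> exists N, supports_set N U.
Proof. intros [HS [N HN]]; exists N; intros a b Ha Hb.
  apply functional_extensionality; intro w; unfold swapset; apply propositional_extensionality; split.
  - intro H; eapply HS; [|apply H]. apply alpha_sym.
    pose proof (HN _ H a b Ha Hb) as K; rewrite swapw_invol in K; exact K.
  - intro H; eapply HS; [apply alpha_sym, HN; eauto|auto]. Qed.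

Lemma swap_fresh_fix a a' U : fresh_set a U -> fresh_set a' U -> a <> a' ->
  forall w, U (swapw a a' w) = U w.
Proof. intros [N1 [H1 n1]] [N2 [H2 n2]] Hne w.
  destruct (fresh_ex (a :: a' :: N1 ++ N2)) as [c Hc]; simpl in Hc; rewrite in_app_iff in Hc.
  assert (E : swapw a a' w = swapw a c (swapw a' c (swapw a c w))).
  { unfold swapw; rewrite !map_map; apply map_ext; intros [x|x]; simpl; f_equal;
    apply swapn_comp; intro; subst; tauto. }
  assert (F1 : forall x, U (swapw a c x) = U x).
  { intro x; exact (equal_f (H1 a c n1 ltac:(tauto)) x). }
  assert (F2 : forall x, U (swapw a' c x) = U x).
  { intro x; exact (equal_f (H2 a' c n2 ltac:(tauto)) x). }
  rewrite E, F1, F2, F1; auto. Qed.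

Theorem lemma4p21 :
  is_hom (fun U => U) /\
  (forall e : cset -> cset, is_hom e -> forall U, inPufs U -> e U = U).
Proof.
  split.
  - split; [|split].
    + intros U HU; split; [apply HU|]; destruct (ufs_supp U HU) as [N HN]; exists N; auto.
    + reflexivity.
    + intros U a a' HU Ha Ha'; simpl; split; [|split].
      * apply propositional_extensionality; split;
        [intros [w [Hw Hal]]; eapply (proj1 HU); [apply alpha_sym, Hal|auto]
        |intro H; exists []; split; auto; apply alpha_refl].
      * intro c; exact (equal_f (sub_eq (Fr c) U (proj1 HU)) _ ) || (rewrite (sub_eq (Fr c) U (proj1 HU)); reflexivity).
      * rewrite (sub_eq (Bd a) U (proj1 HU)).
        destruct (Nat.eq_dec a a') as [<-|Hne]; [left; auto|right; split].
        -- destruct Ha' as [N [HN Hn]]; exists (a :: N); split; [|simpl; intros [->|]; tauto].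
           intros x y Hx Hy; simpl in Hx, Hy; apply functional_extensionality; intro v; unfold swapset.
           assert (E : swapw x y (Bd a :: v) = Bd a :: swapw x y v).
           { rewrite swapw_cons; simpl; f_equal; f_equal; unfold swapn;
             destruct (Nat.eqb_spec a x); [subst; tauto|]; destruct (Nat.eqb_spec a y); [subst; tauto|auto]. }
           rewrite <- E; exact (equal_f (HN x y ltac:(tauto) ltac:(tauto)) _).
        -- apply functional_extensionality; intro v; unfold swapset.
           rewrite <- (swap_fresh_fix a a' U Ha Ha' Hne (Bd a' :: v)).
           rewrite swapw_cons; simpl; rewrite swapn_r; reflexivity.
  - intros e [He1 [He2 He3]] U HU.
    assert (key : forall n U w, length w = n -> inPufs U -> (e U w <-> U w)).
    { induction n; intros U0 w Hl HU0;
      destruct (ufs_supp U0 HU0) as [N1 HN1];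
      destruct (proj2 (He1 U0 HU0)) as [N2 HN2];
      destruct w as [|[c|b] v]; simpl in Hl; try discriminate.
      - destruct (fresh_ex (N1 ++ N2)) as [a Ha]; rewrite in_app_iff in Ha.
        destruct (He3 U0 a a HU0 ltac:(exists N1; split; tauto) ltac:(exists N2; split; tauto))
          as [H0 _].
        rewrite <- H0; split;
        [intros [w [Hw Hal]]; eapply (proj1 HU0); [apply alpha_sym, Hal|auto]
        |intro H; exists []; split; auto; apply alpha_refl].
      - destruct (fresh_ex (N1 ++ N2)) as [a Ha]; rewrite in_app_iff in Ha.
        destruct (He3 U0 a a HU0 ltac:(exists N1; split; tauto) ltac:(exists N2; split; tauto))
          as [_ [H1 _]].
        pose proof (equal_f (H1 c) v) as E; simpl in E; rewrite <- E.
        rewrite (IHn _ v) by (auto || apply sub_Pufs; auto).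
        pose proof (equal_f (sub_eq (Fr c) U0 (proj1 HU0)) v) as E2; simpl in E2; rewrite E2; tauto.
      - destruct (fresh_ex (N1 ++ N2 ++ names v)) as [a Ha]; rewrite !in_app_iff in Ha.
        destruct (He3 U0 a a HU0 ltac:(exists N1; split; tauto) ltac:(exists N2; split; tauto))
          as [_ [_ H3]].
        set (X := e _) in H3.
        assert (XY : X = fun v => e U0 (Bd a :: v)).
        { destruct H3 as [[_ H]|[_ H]]; [exact H|]. transitivity (swapset a a X); [|exact H]. apply functional_extensionality;
          intro; unfold swapset; rewrite swapw_same; auto. }
        assert (Hal : alpha (Bd b :: v) (Bd a :: swapw b a v)).
        { assert (Hf : fresh_word a v) by (unfold fresh_word; tauto).
          exact (alpha_rule [] b v a (swapw b a v) (or_intror (conj Hf eq_refl))). }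
        assert (S1 : e U0 (Bd b :: v) <-> e U0 (Bd a :: swapw b a v)).
        { destruct (He1 U0 HU0) as [HS _]; split; intro; eapply HS; eauto; apply alpha_sym; auto. }
        assert (S2 : U0 (Bd b :: v) <-> U0 (Bd a :: swapw b a v)).
        { destruct HU0 as [HS _]; split; intro; eapply HS; eauto; apply alpha_sym; auto. }
        rewrite S1, S2. pose proof (equal_f XY (swapw b a v)) as E; simpl in E; rewrite <- E.
        unfold X; rewrite IHn; [| unfold swapw; rewrite length_map; auto | apply sub_Pufs; auto].
        pose proof (equal_f (sub_eq (Bd a) U0 (proj1 HU0)) (swapw b a v)) as E2; simpl in E2; rewrite E2; tauto. }
    apply functional_extensionality; intro w; apply propositional_extensionality;
    apply (key (length w)); auto.
Qed.
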